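(* In $G=BS(1,2)$, let $c_0(n)$ be the number of conjugacy classes of $G$ contained in the subgroup $\mathbb{Z}[1/2]$ whose length with respect to $\{a,t\}$ is $n$. Then the growth rate $\limsup_n c_0(n)^{1/n}$ of these conjugacy classes is approximately $1.348$.
   Context: $BS(1,2)=\langle a,t\mid tat^{-1}=a^2\rangle\cong \mathbb{Z}[1/2]\rtimes\mathbb{Z}$ via $a\mapsto(1,0)$, $t\mapsto(0,1)$; $\mathbb{Z}[1/2]=\{(x,0)\}$. The length of a conjugacy class is the minimal word length of its elements; the growth rate is the reciprocal of the radius of convergence of $\sum c_0(n)z^n$. *)

(* Defs.v *)
From Stdlib Require Import Reals ZArith List ClassicalEpsilon.
From Coquelicot Require Import Coquelicot.
Open Scope R_scope.

(** BS(1,2) = Z[1/2] ⋊ Z, with (x,k)(y,l) = (x + 2^k y, k + l);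
    a = (1,0), t = (0,1).  Z[1/2] is modelled as the dyadic reals. *)
Definition dyadic (x : R) : Prop := exists (m : Z) (k : nat), x = IZR m / 2 ^ k.

Definition BS : Type := (R * Z)%type.

Definition inG (g : BS) : Prop := dyadic (fst g).

Definition bs_mul (g h : BS) : BS :=
  (fst g + powerRZ 2 (snd g) * fst h, (snd g + snd h)%Z).
Definition bs_inv (g : BS) : BS :=
  (- (powerRZ 2 (- snd g) * fst g), (- snd g)%Z).
Definition bs_one : BS := (0, 0%Z).

Definition gen_a : BS := (1, 0%Z).
Definition gen_t : BS := (0, 1%Z).

Definition gens : list BS := gen_a :: bs_inv gen_a :: gen_t :: bs_inv gen_t :: nil.

Definition eval_word (w : list BS) : BS := fold_right bs_mul bs_one w.

Definition in_ball (n : nat) (g : BS) : Prop :=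
  exists w : list BS, (List.length w <= n)%nat /\ List.Forall (fun s => List.In s gens) w /\ eval_word w = g.

Definition conjG (g g' : BS) : Prop :=
  inG g /\ exists h : BS, inG h /\ bs_mul (bs_mul h g) (bs_inv h) = g'.

Definition in_Z12 (g : BS) : Prop := inG g /\ snd g = 0%Z.

Definition class_in_Z12 (g : BS) : Prop :=
  inG g /\ forall g', conjG g g' -> in_Z12 g'.

Definition class_length_is (g : BS) (n : nat) : Prop :=
  (exists g', conjG g g' /\ in_ball n g') /\
  (forall g' m, conjG g g' -> in_ball m g' -> (n <= m)%nat).

Definition is_c0 (n m : nat) : Prop :=
  exists reps : list BS,
    List.length reps = m /\
    (forall g, List.In g reps -> class_in_Z12 g /\ class_length_is g n) /\
    (forall i j, (i < m)%nat -> (j < m)%nat ->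
       conjG (List.nth i reps bs_one) (List.nth j reps bs_one) -> i = j) /\
    (forall g, class_in_Z12 g -> class_length_is g n ->
       exists r, List.In r reps /\ conjG g r).

Definition c0 (n : nat) : nat := epsilon (inhabits 0%nat) (is_c0 n).

Definition c0_root (n : nat) : R :=
  if Nat.eqb (c0 n) 0 then 0 else Rpower (INR (c0 n)) (/ INR n).

Definition c0_growth_rate : Rbar := LimSup_seq c0_root.

(* Main.v *)
Require Import Defs.
From Stdlib Require Import Reals.
From Coquelicot Require Import Coquelicot.
Open Scope R_scope.
From Stdlib Require Import ZArith Lia Lra List ClassicalEpsilon Classical.
Import ListNotations.

Module Dev.
Open Scope Z_scope.

Fixpoint W (V : Z) (L : nat) : Z :=
  match L with
  | O => Z.abs V
  | S L' => if Z.even V then W (V / 2) L'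
            else 1 + Z.min (W ((V - 1) / 2) L') (W ((V + 1) / 2) L')
  end.

Lemma W_S V L : W V (S L) = if Z.even V then W (V / 2) L
            else 1 + Z.min (W ((V - 1) / 2) L) (W ((V + 1) / 2) L).
Proof. reflexivity. Qed.

Lemma W_even u L : W (2 * u) (S L) = W u L.
Proof. rewrite W_S, Z.even_even. f_equal. rewrite Z.mul_comm, Z.div_mul; lia. Qed.

Lemma W_odd u L : W (2 * u + 1) (S L) = 1 + Z.min (W u L) (W (u + 1) L).
Proof.
  rewrite W_S, Z.even_odd.
  replace (2 * u + 1 - 1) with (u * 2) by lia.
  replace (2 * u + 1 + 1) with ((u + 1) * 2) by lia.
  rewrite !Z.div_mul by lia. reflexivity.
Qed.

Lemma parity V : exists u, V = 2 * u \/ V = 2 * u + 1.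
Proof.
  exists (V / 2). pose proof (Z.div_mod V 2). pose proof (Z.mod_pos_bound V 2). lia.
Qed.

Lemma W_nonneg L : forall V, 0 <= W V L.
Proof.
  induction L; intros V. simpl. lia.
  destruct (parity V) as [u [-> | ->]].
  rewrite W_even; auto. rewrite W_odd. pose proof (IHL u). pose proof (IHL (u+1)). lia.
Qed.

Lemma W_lip L : forall V, W (V + 1) L <= W V L + 1 /\ W V L <= W (V + 1) L + 1.
Proof.
  induction L; intros V. simpl. lia.
  destruct (parity V) as [u [-> | ->]].
  - rewrite W_even, W_odd. pose proof (IHL u). lia.
  - replace (2 * u + 1 + 1) with (2 * (u + 1)) by lia.
    rewrite W_even, W_odd. pose proof (IHL u). lia.
Qed.

Lemma pow2S p : 2 ^ Z.of_nat (S p) = 2 * 2 ^ Z.of_nat p.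
Proof. rewrite Nat2Z.inj_succ, Z.pow_succ_r; lia. Qed.

Lemma W_add p : forall L V, (p <= L)%nat ->
  W (V + 2 ^ Z.of_nat p) L <= W V L + 1 /\ W (V - 2 ^ Z.of_nat p) L <= W V L + 1.
Proof.
  induction p; intros L V Hp.
  - simpl. pose proof (W_lip L V). pose proof (W_lip L (V - 1)).
    replace (V - 1 + 1) with V in * by lia. lia.
  - destruct L as [|L]; [lia|]. rewrite pow2S.
    destruct (parity V) as [u [-> | ->]].
    + replace (2 * u + 2 * 2 ^ Z.of_nat p) with (2 * (u + 2 ^ Z.of_nat p)) by lia.
      replace (2 * u - 2 * 2 ^ Z.of_nat p) with (2 * (u - 2 ^ Z.of_nat p)) by lia.
      rewrite !W_even. apply IHp. lia.
    + replace (2 * u + 1 + 2 * 2 ^ Z.of_nat p) with (2 * (u + 2 ^ Z.of_nat p) + 1) by lia.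
      replace (2 * u + 1 - 2 * 2 ^ Z.of_nat p) with (2 * (u - 2 ^ Z.of_nat p) + 1) by lia.
      rewrite !W_odd.
      destruct (IHp L u) as [H1 H2]; [lia|].
      destruct (IHp L (u+1)) as [H3 H4]; [lia|].
      replace (u + 2 ^ Z.of_nat p + 1) with (u + 1 + 2 ^ Z.of_nat p) by lia.
      replace (u - 2 ^ Z.of_nat p + 1) with (u + 1 - 2 ^ Z.of_nat p) by lia.
      lia.
Qed.

Lemma W_ext L : forall V, W V (S L) <= W V L.
Proof.
  induction L; intros V.
  - destruct (parity V) as [u [-> | ->]].
    + rewrite W_even. cbn [W]. lia.
    + rewrite W_odd. cbn [W]. lia.
  - destruct (parity V) as [u [-> | ->]].
    + rewrite !W_even. apply IHL.
    + rewrite !W_odd. pose proof (IHL u). pose proof (IHL (u+1)). lia.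
Qed.

Lemma W_naf L u : exists y, (2 * u + 1 = 4 * y + 1 \/ 2 * u + 1 = 4 * y - 1) /\
   1 + W y L <= W (2 * u + 1) (S (S L)).
Proof.
  rewrite W_odd. destruct (parity u) as [y [-> | ->]].
  - exists y. split. lia.
    replace (2 * y + 1) with (2 * y + 1) by lia.
    rewrite W_even, W_odd. pose proof (W_lip L y). lia.
  - exists (y + 1). split. lia.
    replace (2 * y + 1 + 1) with (2 * (y + 1)) by lia.
    rewrite W_even, W_odd. pose proof (W_lip L y). lia.
Qed.
Open Scope Z_scope.

Definition zrange (k : nat) : list Z :=
  map (fun i => Z.of_nat i - Z.of_nat k) (seq 0 (2 * k + 1)).

Lemma zrange_in k V : Z.abs V <= Z.of_nat k -> In V (zrange k).
Proof.
  intros H. unfold zrange. apply in_map_iff.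
  exists (Z.to_nat (V + Z.of_nat k)). split. lia.
  apply in_seq. lia.
Qed.

Lemma zrange_len k : length (zrange k) = (2 * k + 1)%nat.
Proof. unfold zrange. rewrite length_map, length_seq. reflexivity. Qed.

Fixpoint G (L k : nat) : list Z :=
  match L with
  | O => zrange k
  | S L1 => map (Z.mul 2) (G L1 k) ++
      match k with
      | O => []
      | S k' => flat_map (fun y => [2 * y + 1; 2 * y - 1])
                  (match L1 with O => zrange k' | S L2 => map (Z.mul 2) (G L2 k') end)
      end
  end.

Lemma G_in_aux L : (forall V k, W V L <= Z.of_nat k -> In V (G L k)) /\
                   (forall V k, W V (S L) <= Z.of_nat k -> In V (G (S L) k)).
Proof.
  induction L as [|L [IH1 IH2]].
  - split.
    + intros V k H. simpl in H. apply zrange_in. exact H.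
    + intros V k H. destruct (parity V) as [u [-> | ->]].
      * rewrite W_even in H. simpl in H. cbn [G]. apply in_or_app. left.
        apply in_map. apply zrange_in. exact H.
      * rewrite W_odd in H. cbn [W] in H. destruct k as [|k']. lia.
        cbn [G]. apply in_or_app. right. apply in_flat_map.
        destruct (Z.le_gt_cases (Z.abs u) (Z.of_nat k')).
        -- exists u. split. apply zrange_in. auto. cbn [In]. auto.
        -- exists (u + 1). split. apply zrange_in. lia. cbn [In]. right. left. lia.
  - split. exact IH2.
    intros V k H. destruct (parity V) as [u [-> | ->]].
    + rewrite W_even in H. change (G (S (S L)) k) with
        (map (Z.mul 2) (G (S L) k) ++
      match k with
      | O => []
      | S k' => flat_map (fun y => [2 * y + 1; 2 * y - 1]) (map (Z.mul 2) (G L k'))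
      end).
      apply in_or_app. left. apply in_map. apply IH2. exact H.
    + destruct (W_naf L u) as [y [Hy Hw]].
      destruct k as [|k']. pose proof (W_nonneg L y). lia.
      change (G (S (S L)) (S k')) with
        (map (Z.mul 2) (G (S L) (S k')) ++
         flat_map (fun y => [2 * y + 1; 2 * y - 1]) (map (Z.mul 2) (G L k'))).
      apply in_or_app. right. apply in_flat_map. exists (2 * y). split.
      apply in_map. apply IH1. lia.
      cbn [In]. lia.
Qed.

Lemma G_in L V k : W V L <= Z.of_nat k -> In V (G L k).
Proof. apply (proj1 (G_in_aux L)). Qed.

Lemma len_flat2 (f : Z -> Z) (g : Z -> Z) l :
  length (flat_map (fun y => [f y; g y]) l) = (2 * length l)%nat.
Proof. induction l; simpl; auto. rewrite IHl. lia. Qed.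

Open Scope R_scope.
Definition x0 : R := 13482 / 10000.

Lemma x0_ge1 : 1 <= x0. Proof. unfold x0; lra. Qed.
Lemma x0_poly : x0 ^ 3 + 2 <= x0 ^ 5. Proof. unfold x0. simpl. lra. Qed.
Lemma x0_pow_ge1 n : 1 <= x0 ^ n.
Proof. apply pow_R1_Rle. apply x0_ge1. Qed.

Lemma INR2 m : INR (2 * m + 1) = 2 * INR m + 1.
Proof. rewrite plus_INR, mult_INR. simpl. lra. Qed.

Lemma G_bound_aux L : (forall k, INR (length (G L k)) <= 4 * (INR k + 1) * x0 ^ (2 * L + k)) /\
  (forall k, INR (length (G (S L) k)) <= 4 * (INR k + 1) * x0 ^ (2 * S L + k)).
Proof.
  induction L as [|L [IH1 IH2]].
  - split.
    + intros k. simpl G. rewrite zrange_len. rewrite Nat.mul_0_r, Nat.add_0_l.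
      pose proof (x0_pow_ge1 k). rewrite INR2.
      pose proof (pos_INR k). nra.
    + intros k. cbn [G]. rewrite length_app, length_map, zrange_len.
      destruct k as [|k'].
      * simpl. unfold x0. lra.
      * rewrite len_flat2, zrange_len.
        replace (2 * 1 + S k')%nat with (k' + 3)%nat by lia. rewrite pow_add.
        pose proof (x0_pow_ge1 k'). assert (x0 ^ 3 >= 2). unfold x0; simpl; lra.
        replace (2 * S k' + 1 + 2 * (2 * k' + 1))%nat with (6 * k' + 5)%nat by lia. rewrite plus_INR, mult_INR, S_INR. simpl (INR 6). simpl (INR 5). pose proof (pos_INR k'). pose proof (pos_INR k').
        assert (0 <= (INR k' + 1 + 1)) by lra.
        rewrite S_INR. assert (x0 ^ k' * x0 ^ 3 >= 2) by nra. nra.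
  - split. exact IH2. intros k.
    change (G (S (S L)) k) with
        (map (Z.mul 2) (G (S L) k) ++
      match k with
      | O => []
      | S k' => flat_map (fun y => [2 * y + 1; 2 * y - 1]) (map (Z.mul 2) (G L k'))
      end)%Z.
    rewrite length_app, length_map. destruct k as [|k'].
    + simpl length. rewrite Nat.add_0_r. eapply Rle_trans. apply IH2.
      apply Rmult_le_compat_l. simpl INR; lra. apply Rle_pow. apply x0_ge1. lia.
    + rewrite len_flat2, length_map. rewrite plus_INR, mult_INR.
      pose proof (IH2 (S k')) as H2. pose proof (IH1 k') as H1.
      replace (2 * S L + S k')%nat with (2 * L + k' + 3)%nat in H2 by lia.
      replace (2 * S (S L) + S k')%nat with (2 * L + k' + 5)%nat by lia.
      rewrite pow_add in H2 |- *.
      set (X := x0 ^ (2 * L + k')) in *.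
      assert (1 <= X) by apply x0_pow_ge1.
      pose proof x0_poly. rewrite S_INR in *. pose proof (pos_INR k').
      simpl (INR 2).
      assert (HH: 4 * (INR k' + 1 + 1) * (X * x0 ^ 3) + 2 * (4 * (INR k' + 1) * X)
             <= 4 * (INR k' + 1 + 1) * (X * (x0 ^ 3 + 2))) by nra.
      assert (HH2: 4 * (INR k' + 1 + 1) * (X * (x0 ^ 3 + 2)) <= 4 * (INR k' + 1 + 1) * (X * x0 ^ 5)).
      { apply Rmult_le_compat_l. lra. apply Rmult_le_compat_l; lra. }
      change (INR 1) with 1. rewrite (S_INR k'). lra.
Qed.
Open Scope Z_scope.

Definition E (n : nat) : list Z :=
  flat_map (fun L => if Nat.leb (2 * L) n then G L (n - 2 * L) else []) (seq 0 (S n)).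

Lemma E_in n L V : W V L + 2 * Z.of_nat L <= Z.of_nat n -> In V (E n).
Proof.
  intros H. pose proof (W_nonneg L V). unfold E. apply in_flat_map.
  exists L. split. apply in_seq. lia.
  replace (Nat.leb (2 * L) n) with true by (symmetry; apply Nat.leb_le; lia).
  apply G_in. lia.
Qed.

Open Scope R_scope.

Lemma len_flat_bound {A B} (f : A -> list B) (l : list A) M :
  (forall a, In a l -> INR (length (f a)) <= M) ->
  INR (length (flat_map f l)) <= INR (length l) * M.
Proof.
  induction l; intros H. simpl. lra.
  simpl flat_map. simpl length. rewrite length_app, plus_INR, S_INR.
  pose proof (H a (or_introl eq_refl)).
  assert (INR (length (flat_map f l)) <= INR (length l) * M).
  { apply IHl. intros b Hb. apply H. right. auto. }
  lra.
Qed.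

Lemma E_bound n : INR (length (E n)) <= 4 * (INR n + 1) ^ 2 * x0 ^ n.
Proof.
  unfold E. eapply Rle_trans. apply (len_flat_bound _ _ (4 * (INR n + 1) * x0 ^ n)).
  - intros L HL. destruct (Nat.leb (2 * L) n) eqn:E1.
    + apply Nat.leb_le in E1. eapply Rle_trans. apply (proj1 (G_bound_aux L)).
      replace (2 * L + (n - 2 * L))%nat with n by lia.
      apply Rmult_le_compat_r. pose proof (x0_pow_ge1 n). lra.
      apply Rmult_le_compat_l. lra. apply Rplus_le_compat_r. apply le_INR. lia.
    + simpl. pose proof (x0_pow_ge1 n). pose proof (pos_INR n). nra.
  - rewrite length_seq, S_INR. pose proof (x0_pow_ge1 n). pose proof (pos_INR n). nra.
Qed.
Open Scope Z_scope.

Definition sg (V : Z) : Z := if Z.eqb (V mod 4) 1 then 1 else -1.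
Definition beta (V : Z) : Z := 2 * V - sg V.
Definition a1 (V : Z) : Z := 4 * V + 1.
Definition a2 (V : Z) : Z := 4 * V - 1.

Fixpoint P (n : nat) : list Z :=
  match n with
  | S (S n') => map beta (P n') ++
      match n' with
      | S (S (S m)) => map a1 ((if Nat.leb 1 m then [1] else []) ++ P m) ++
                       map a2 ((if Nat.leb 1 m then [1] else []) ++ P m)
      | _ => []
      end
  | _ => []
  end.

Definition Fam (n : nat) : list Z := (if Nat.leb 1 n then [1] else []) ++ P n.

Lemma P_SS n : P (S (S n)) = map beta (P n) ++
   match n with S (S (S m)) => map a1 (Fam m) ++ map a2 (Fam m) | _ => [] end.
Proof. reflexivity. Qed.

Definition goodP (V : Z) : Prop := V mod 2 = 1 /\ 3 <= V.

Lemma beta_spec V : V mod 2 = 1 -> exists t, V = 4 * t + 1 /\ beta V = 8 * t + 1 \/ V = 4 * t + 3 /\ beta V = 8 * t + 7.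
Proof.
  intros H. exists (V / 4).
  assert (V mod 4 = 1 /\ V = 4 * (V/4) + 1 \/ V mod 4 = 3 /\ V = 4 * (V/4) + 3) by (Z.div_mod_to_equations; lia).
  unfold beta, sg. destruct H0 as [[H2 H3]|[H2 H3]]; rewrite H2; [left|right]; simpl (Z.eqb _ _); cbv iota; lia.
Qed.

Lemma map_NoDup_inj {A B} (f : A -> B) l : NoDup l ->
  (forall x y, In x l -> In y l -> f x = f y -> x = y) -> NoDup (map f l).
Proof.
  induction l; intros Hn Hi; simpl. constructor.
  inversion Hn; subst. constructor.
  - intros Hin. apply in_map_iff in Hin. destruct Hin as [y [Hy1 Hy2]].
    assert (y = a) by (apply Hi; simpl; auto). subst. contradiction.
  - apply IHl; auto. intros x y Hx Hy. apply Hi; simpl; auto.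
Qed.

Lemma P_good n : (forall V, In V (P n) -> goodP V) /\ NoDup (P n).
Proof.
  induction n as [n IH] using (well_founded_induction lt_wf).
  destruct n as [|[|n]]. split; simpl; try tauto; constructor. split; simpl; try tauto; constructor.
  rewrite P_SS. destruct (IH n ltac:(lia)) as [Hg Hd].
  assert (HF: forall m, (m < S (S n))%nat -> (forall V, In V (Fam m) -> V mod 2 = 1 /\ 1 <= V) /\ NoDup (Fam m)).
  { intros m Hm. destruct (IH m Hm) as [Hg' Hd']. unfold Fam. split.
    - intros V HV. apply in_app_iff in HV. destruct HV as [HV|HV].
      destruct (Nat.leb 1 m); simpl in HV; [destruct HV as [<-|[]]; split; reflexivity|tauto].
      destruct (Hg' V HV). unfold goodP in *. lia.
    - apply NoDup_app; auto. destruct (Nat.leb 1 m); repeat constructor; simpl; tauto.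
      intros a Ha. destruct (Nat.leb 1 m); simpl in Ha; [|tauto]. destruct Ha as [<-|[]].
      intros Hin. destruct (Hg' 1 Hin). lia. }
  assert (Hb: forall V, In V (map beta (P n)) -> goodP V /\ (V mod 8 = 1 \/ V mod 8 = 7)).
  { intros V HV. apply in_map_iff in HV. destruct HV as [W [<- HW]].
    destruct (Hg W HW) as [HW1 HW2]. destruct (beta_spec W HW1) as [t [[-> ->]|[-> ->]]];
    unfold goodP; Z.div_mod_to_equations; lia. }
  split.
  - intros V HV. apply in_app_iff in HV. destruct HV as [HV|HV]. apply Hb; auto.
    destruct n as [|[|[|m]]]; try (simpl in HV; tauto).
    destruct (HF m ltac:(lia)) as [Hg' _].
    apply in_app_iff in HV. destruct HV as [HV|HV]; apply in_map_iff in HV; destruct HV as [W [<- HW]];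
    destruct (Hg' W HW); unfold goodP, a1, a2; Z.div_mod_to_equations; lia.
  - apply NoDup_app.
    + apply map_NoDup_inj; auto. intros x y Hx Hy Hxy.
      destruct (Hg x Hx) as [Hx1 _]. destruct (Hg y Hy) as [Hy1 _].
      destruct (beta_spec x Hx1) as [t [[-> E1]|[-> E1]]];
      destruct (beta_spec y Hy1) as [s [[-> E2]|[-> E2]]]; lia.
    + destruct n as [|[|[|m]]]; try constructor.
      destruct (HF m ltac:(lia)) as [Hg' Hd'].
      apply NoDup_app.
      * apply map_NoDup_inj; auto. unfold a1. intros; lia.
      * apply map_NoDup_inj; auto. unfold a2. intros; lia.
      * intros a Ha1 Ha2. apply in_map_iff in Ha1, Ha2.
        destruct Ha1 as [x [<- _]]. destruct Ha2 as [y [Hy _]]. unfold a1, a2 in Hy. lia.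
    + intros a Ha1 Ha2. destruct (Hb a Ha1) as [_ Hm].
      destruct n as [|[|[|m]]]; try (simpl in Ha2; tauto).
      destruct (HF m ltac:(lia)) as [Hg' _].
      apply in_app_iff in Ha2. destruct Ha2 as [Ha2|Ha2]; apply in_map_iff in Ha2;
      destruct Ha2 as [W [<- HW]]; destruct (Hg' W HW) as [HW1 _];
      unfold a1, a2 in Hm; Z.div_mod_to_equations; lia.
Qed.

Lemma Fam_pos n : (1 <= n)%nat -> length (Fam n) = S (length (P n)).
Proof.
  intros H. unfold Fam. replace (Nat.leb 1 n) with true by (symmetry; apply Nat.leb_le; lia).
  reflexivity.
Qed.

Lemma Fam_len n' : (1 <= n')%nat -> length (Fam (S (S n'))) =
  (length (Fam n') + match n' with S (S (S m)) => 2 * length (Fam m) | _ => 0 end)%nat.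
Proof.
  intros H. rewrite !Fam_pos by lia. rewrite P_SS, length_app, length_map.
  destruct n' as [|[|[|m]]]; try lia; cbv iota; [simpl; lia|simpl; lia|].
  rewrite length_app, !length_map. lia.
Qed.

Open Scope R_scope.
Definition yb : R := 13477 / 10000.

Lemma Fam_lower n : (1 <= n)%nat -> yb ^ n <= yb ^ 5 * INR (length (Fam n)).
Proof.
  induction n as [n IH] using (well_founded_induction lt_wf). intros Hn.
  assert (Hy1 : 1 <= yb) by (unfold yb; lra).
  destruct (le_lt_dec n 5) as [Hs|Hs].
  - assert (1 <= INR (length (Fam n))).
    { unfold Fam. replace (Nat.leb 1 n) with true by (symmetry; apply Nat.leb_le; lia).
      simpl length. rewrite S_INR. pose proof (pos_INR (length (P n))). lra. }
    assert (yb ^ n <= yb ^ 5) by (apply Rle_pow; auto).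
    assert (0 <= yb ^ 5) by (apply pow_le; lra). nra.
  - destruct n as [|[|n']]; try lia.
    rewrite Fam_len by lia.
    destruct n' as [|[|[|m]]]; try lia.
    assert (H1 := IH (S (S (S m))) ltac:(lia) ltac:(lia)).
    assert (H2 := IH m ltac:(lia) ltac:(lia)).
    rewrite plus_INR, mult_INR.
    replace (S (S (S (S (S m))))) with (m + 5)%nat by lia.
    replace (S (S (S m))) with (m + 3)%nat in * by lia.
    rewrite !pow_add in *.
    assert (Hp : yb ^ 5 <= yb ^ 3 + 2) by (unfold yb; simpl; lra).
    assert (0 <= yb ^ m) by (apply pow_le; lra).
    assert (yb ^ m * yb ^ 5 <= yb ^ m * yb ^ 3 + 2 * yb ^ m) by nra.
    change (INR 2) with 2. lra.
Qed.
Open Scope R_scope.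

Lemma two_nz : (2:R) <> 0. Proof. lra. Qed.

Lemma pRZ_inv k : powerRZ 2 k * powerRZ 2 (- k) = 1.
Proof. rewrite <- powerRZ_add by lra. rewrite Z.add_opp_diag_r. reflexivity. Qed.

Lemma pRZ_cases k : exists a : nat, (k = Z.of_nat a /\ powerRZ 2 k = 2 ^ a) \/
                                   (k = (- Z.of_nat a)%Z /\ powerRZ 2 k = / 2 ^ a).
Proof.
  destruct k as [|p|p].
  - exists 0%nat. left. simpl. auto.
  - exists (Pos.to_nat p). left. split. rewrite positive_nat_Z. reflexivity. reflexivity.
  - exists (Pos.to_nat p). right. split. rewrite positive_nat_Z. reflexivity. reflexivity.
Qed.

Lemma pRZ_pos k : 0 < powerRZ 2 k.
Proof. apply powerRZ_lt. lra. Qed.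

Lemma conj_form x y k : bs_mul (bs_mul (y, k) (x, 0%Z)) (bs_inv (y, k)) = (powerRZ 2 k * x, 0%Z).
Proof.
  unfold bs_mul, bs_inv. simpl. f_equal.
  - rewrite Z.add_0_r. pose proof (pRZ_inv k).
    transitivity (y + powerRZ 2 k * x - (powerRZ 2 k * powerRZ 2 (- k)) * y). ring.
    rewrite H. ring.
  - lia.
Qed.

Lemma dyadic_0 : dyadic 0.
Proof. exists 0%Z, 0%nat. simpl. field. Qed.

Lemma dyadic_div V p : dyadic (IZR V / 2 ^ p).
Proof. exists V, p. reflexivity. Qed.

Lemma dyadic_IZR V : dyadic (IZR V).
Proof. exists V, 0%nat. simpl. field. Qed.

Lemma dyadic_mul x k : dyadic x -> dyadic (powerRZ 2 k * x).
Proof.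
  intros [m [j ->]]. destruct (pRZ_cases k) as [a [[_ ->]|[_ ->]]].
  - exists (m * 2 ^ Z.of_nat a)%Z, j. rewrite mult_IZR, <- pow_IZR. simpl (IZR 2).
    field. apply pow_nonzero. lra.
  - exists m, (j + a)%nat. rewrite pow_add. field. split; apply pow_nonzero; lra.
Qed.

Definition Zc (g : BS) : Prop := exists x, g = (x, 0%Z) /\ dyadic x.

Lemma conj_char x g' : dyadic x -> (conjG (x, 0%Z) g' <-> exists k, g' = (powerRZ 2 k * x, 0%Z)).
Proof.
  intros Hx. split.
  - intros [_ [[y k] [_ H]]]. rewrite conj_form in H. exists k. auto.
  - intros [k ->]. split. exact Hx. exists (0, k). split. apply dyadic_0. apply conj_form.
Qed.

Lemma conj_Zc g g' : Zc g -> conjG g g' -> Zc g'.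
Proof.
  intros [x [-> Hx]] H. apply conj_char in H; auto. destruct H as [k ->].
  exists (powerRZ 2 k * x). split; auto. apply dyadic_mul; auto.
Qed.

Lemma conj_refl g : Zc g -> conjG g g.
Proof.
  intros [x [-> Hx]]. apply conj_char; auto. exists 0%Z. simpl. f_equal. ring.
Qed.

Lemma conj_sym g g' : Zc g -> conjG g g' -> conjG g' g.
Proof.
  intros [x [-> Hx]] H. apply conj_char in H; auto. destruct H as [k ->].
  apply conj_char. apply dyadic_mul; auto. exists (- k)%Z. f_equal.
  rewrite <- Rmult_assoc, Rmult_comm with (r1 := powerRZ 2 (- k)), pRZ_inv. ring.
Qed.

Lemma conj_trans g g' g'' : Zc g -> conjG g g' -> conjG g' g'' -> conjG g g''.
Proof.
  intros [x [-> Hx]] H1 H2. apply conj_char in H1; auto. destruct H1 as [k ->].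
  apply conj_char in H2; [|apply dyadic_mul; auto]. destruct H2 as [j ->].
  apply conj_char; auto. exists (j + k)%Z. rewrite powerRZ_add by lra. f_equal. ring.
Qed.

Lemma class_Zc g : class_in_Z12 g -> Zc g.
Proof.
  intros [Hg H]. destruct g as [x k].
  assert (Hc : conjG (x, k) (x, k)).
  { split. exact Hg. exists (0, 0%Z). split. apply dyadic_0.
    unfold bs_mul, bs_inv. simpl. f_equal. ring. lia. }
  destruct (H _ Hc) as [_ Hk]. simpl in Hk. subst. exists x. split; auto.
Qed.

Lemma conj_same g g' : Zc g -> conjG g g' -> forall h, conjG g' h <-> conjG g h.
Proof.
  intros Hg H h. split.
  - intros H2. eapply conj_trans; eauto.
  - intros H2. eapply conj_trans. eapply conj_Zc; eauto. apply conj_sym; eauto. auto.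
Qed.

Lemma Zc_inG g : Zc g -> inG g.
Proof. intros [x [-> Hx]]. exact Hx. Qed.

Lemma class_inv g g' n : class_in_Z12 g -> conjG g g' ->
  class_in_Z12 g' /\ (class_length_is g n -> class_length_is g' n).
Proof.
  intros Hc H. pose proof (class_Zc g Hc) as Hz.
  pose proof (conj_same g g' Hz H) as Hs. split.
  - split. apply Zc_inG. eapply conj_Zc; eauto.
    intros h Hh. apply Hc. apply Hs. auto.
  - intros [[g1 [H1 H2]] H3]. split.
    + exists g1. split; auto. apply Hs. auto.
    + intros g2 m H4 H5. apply (H3 g2 m); auto. apply Hs. auto.
Qed.
Open Scope R_scope.

Lemma bs_assoc a b c : bs_mul (bs_mul a b) c = bs_mul a (bs_mul b c).
Proof.
  destruct a as [a1 a2], b as [b1 b2], c as [c1 c2]. unfold bs_mul. simpl. f_equal.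
  rewrite powerRZ_add by lra. ring. lia.
Qed.

Lemma bs_one_l g : bs_mul bs_one g = g.
Proof. destruct g. unfold bs_mul, bs_one. simpl. f_equal. ring. Qed.

Lemma eval_app w1 w2 : eval_word (w1 ++ w2) = bs_mul (eval_word w1) (eval_word w2).
Proof.
  induction w1; simpl. symmetry. apply bs_one_l.
  rewrite IHw1. symmetry. apply bs_assoc.
Qed.

Lemma eval_tconj w X : eval_word w = (X, 0%Z) ->
  eval_word (gen_t :: w ++ [bs_inv gen_t]) = (2 * X, 0%Z).
Proof.
  intros H. simpl eval_word at 1. rewrite eval_app, H. unfold eval_word, fold_right.
  unfold bs_mul, bs_inv, gen_t, bs_one. simpl. f_equal. field. 
Qed.

Lemma word_inv w : Forall (fun s => In s gens) w ->
  exists p q V, fst (eval_word w) = IZR V / 2 ^ p /\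
    (- Z.of_nat p <= snd (eval_word w) <= Z.of_nat q)%Z /\
    (W V (p + q) + 2 * Z.of_nat (p + q) <= Z.of_nat (length w) + Z.abs (snd (eval_word w)))%Z.
Proof.
  induction w as [|s w IH]; intros Hf.
  - exists 0%nat, 0%nat, 0%Z. simpl. split. field. lia.
  - inversion Hf as [|? ? Hs Hw]; subst. destruct (IH Hw) as [p [q [V [H1 [H2 H3]]]]].
    simpl eval_word. destruct (eval_word w) as [x k]. cbn [fst snd] in H1, H2, H3.
    assert (Hp : 2 ^ p <> 0) by (apply pow_nonzero; lra).
    simpl in Hs. destruct Hs as [<-|[<-|[<-|[<-|[]]]]]; unfold bs_mul, bs_inv, gen_a, gen_t; cbn [fst snd].
    + exists p, q, (V + 2 ^ Z.of_nat p)%Z. split.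
      * rewrite H1, plus_IZR, <- pow_IZR. simpl. field; repeat split; apply pow_nonzero; lra.
      * destruct (W_add p (p + q) V ltac:(lia)) as [Ha _]. simpl length. lia.
    + exists p, q, (V - 2 ^ Z.of_nat p)%Z. split.
      * rewrite H1, minus_IZR, <- pow_IZR. simpl. field; repeat split; apply pow_nonzero; lra.
      * destruct (W_add p (p + q) V ltac:(lia)) as [_ Ha]. simpl length. lia.
    + destruct p as [|p].
      * exists 0%nat, (S q), (2 * V)%Z. split.
        -- rewrite H1, mult_IZR. simpl. field.
        -- simpl (0 + S q)%nat. rewrite W_even. simpl (0 + q)%nat in H3. simpl length. lia.
      * exists p, (S q), V. split.
        -- rewrite H1. simpl. field; repeat split; apply pow_nonzero; lra.
        -- replace (p + S q)%nat with (S p + q)%nat by lia. simpl length. lia.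
    + destruct q as [|q].
      * exists (S p), 0%nat, V. split.
        -- rewrite H1. simpl. field; repeat split; apply pow_nonzero; lra.
        -- pose proof (W_ext (p + 0) V). replace (S p + 0)%nat with (S (p + 0)) by lia.
           simpl length. lia.
      * exists (S p), q, V. split.
        -- rewrite H1. simpl. field; repeat split; apply pow_nonzero; lra.
        -- replace (S p + q)%nat with (p + S q)%nat by lia. simpl length. lia.
Qed.
Open Scope R_scope.

Fixpoint words (n : nat) : list (list BS) :=
  match n with
  | O => [[]]
  | S m => [] :: flat_map (fun s => map (cons s) (words m)) gens
  end.

Lemma words_in n w : (length w <= n)%nat -> Forall (fun s => In s gens) w -> In w (words n).
Proof.
  revert w. induction n; intros w Hl Hf.
  - destruct w; simpl in *; [auto|lia].
  - destruct w as [|s w]. simpl. auto. change (words (S n)) with ([] :: flat_map (fun s => map (cons s) (words n)) gens). right.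
    inversion Hf; subst. apply in_flat_map. exists s. split; auto.
    apply in_map. apply IHn; auto. simpl in Hl. lia.
Qed.

Fixpoint PW {A} (R : A -> A -> Prop) (l : list A) : Prop :=
  match l with
  | [] => True
  | a :: l' => (forall b, In b l' -> ~ R a b) /\ PW R l'
  end.

Lemma PW_nth {A} (R : A -> A -> Prop) l d :
  (forall a b, In a l -> In b l -> R a b -> R b a) -> PW R l ->
  forall i j, (i < length l)%nat -> (j < length l)%nat -> R (nth i l d) (nth j l d) -> i = j.
Proof.
  induction l as [|a l IH]; intros Hs Hp i j Hi Hj Hr; simpl in *. lia.
  destruct Hp as [Ha Hp].
  destruct i as [|i], j as [|j]; auto.
  - exfalso. apply (Ha (nth j l d)). apply nth_In. lia. auto.
  - exfalso. apply (Ha (nth i l d)). apply nth_In. lia. apply Hs; auto. right. apply nth_In. lia.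
  - f_equal. apply IH; auto; try lia; intros; apply Hs; auto.
Qed.

Lemma nth_PW {A} (R : A -> A -> Prop) l d :
  (forall i j, (i < length l)%nat -> (j < length l)%nat -> R (nth i l d) (nth j l d) -> i = j) ->
  PW R l.
Proof.
  induction l as [|a l IH]; intros H; simpl. auto. split.
  - intros b Hb Hr. destruct (In_nth l b d Hb) as [j [Hj <-]].
    assert (0 = S j)%nat. apply (H 0%nat (S j)); simpl; auto; lia. lia.
  - apply IH. intros i j Hi Hj Hr. assert (S i = S j). apply H; simpl; auto; lia. lia.
Qed.

Lemma PW_NoDup {A} (l : list A) : NoDup l -> PW eq l.
Proof.
  induction l; intros H; simpl; auto. inversion H; subst. split; auto.
  intros b Hb ->. contradiction.
Qed.

Lemma inj_count {A B} (l1 : list A) (l2 : list B) (R : A -> B -> Prop) (Rel : A -> A -> Prop) :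
  PW Rel l1 -> (forall a, In a l1 -> exists b, In b l2 /\ R a b) ->
  (forall a a' b, In a l1 -> In a' l1 -> R a b -> R a' b -> Rel a a') ->
  (length l1 <= length l2)%nat.
Proof.
  revert l2. induction l1 as [|a l1 IH]; intros l2 Hp Hc Hi. simpl. lia.
  destruct Hp as [Ha Hp]. destruct (Hc a (or_introl eq_refl)) as [b [Hb Hab]].
  set (dec := fun x y : B => excluded_middle_informative (x = y)).
  assert (length l1 <= length (remove dec b l2))%nat.
  { apply IH; auto.
    - intros a' Ha'. destruct (Hc a' (or_intror Ha')) as [b' [Hb' Hab']].
      exists b'. split; auto. apply in_in_remove; auto. intros ->.
      apply (Ha a'); auto. apply (Hi a a' b); simpl; auto.
    - intros. apply (Hi a0 a' b0); simpl; auto. }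
  pose proof (remove_length_lt dec l2 b Hb). simpl. lia.
Qed.

Fixpoint dd (R : BS -> BS -> Prop) (l : list BS) : list BS :=
  match l with
  | [] => []
  | x :: l' => if excluded_middle_informative (exists y, In y (dd R l') /\ R x y)
               then dd R l' else x :: dd R l'
  end.

Lemma dd_incl R l x : In x (dd R l) -> In x l.
Proof.
  induction l; simpl. auto.
  destruct (excluded_middle_informative _); simpl; intuition.
Qed.

Lemma dd_cover R l : (forall x, In x l -> R x x) -> forall x, In x l -> exists y, In y (dd R l) /\ R x y.
Proof.
  induction l as [|a l IH]; intros Hr x Hx; simpl in *. tauto.
  destruct (excluded_middle_informative _) as [He|He].
  - destruct Hx as [<-|Hx]. auto. apply IH; auto.
  - destruct Hx as [<-|Hx]. exists a. simpl; auto.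
    destruct (IH (fun y Hy => Hr y (or_intror Hy)) x Hx) as [y [Hy1 Hy2]]. exists y. simpl; auto.
Qed.

Lemma dd_PW R l : PW R (dd R l).
Proof.
  induction l as [|a l IH]; simpl. auto.
  destruct (excluded_middle_informative _) as [He|He]. auto.
  simpl. split; auto. intros b Hb Hr. apply He. exists b. auto.
Qed.

Lemma is_c0_exists n : exists m, is_c0 n m.
Proof.
  set (Q := fun g => class_in_Z12 g /\ class_length_is g n).
  set (filt := filter (fun g => if excluded_middle_informative (Q g) then true else false)
                      (map eval_word (words n))).
  assert (Hf : forall g, In g filt <-> In g (map eval_word (words n)) /\ Q g).
  { intros g. unfold filt. rewrite filter_In.
    destruct (excluded_middle_informative (Q g)); intuition discriminate. }
  set (reps := dd conjG filt).
  assert (HQ : forall g, In g reps -> Q g).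
  { intros g Hg. apply dd_incl in Hg. apply Hf in Hg. tauto. }
  exists (length reps). exists reps. split; [reflexivity|]. split; [|split].
  - exact HQ.
  - intros i j Hi Hj. apply PW_nth; auto. 2: apply dd_PW.
    intros a b Ha Hb Hab. apply conj_sym; auto. apply class_Zc. apply HQ; auto.
  - intros g Hc Hl. destruct Hl as [[g' [Hg' [w [Hw1 [Hw2 Hw3]]]]] Hmin].
    assert (Hin : In g' filt).
    { apply Hf. split. apply in_map_iff. exists w. split; auto. apply words_in; auto.
      destruct (class_inv g g' n Hc Hg') as [A1 A2]. split; auto. apply A2. split; eauto.
      exists g'. split; auto. exists w. auto. }
    destruct (dd_cover conjG filt) with (x := g') as [y [Hy1 Hy2]]; auto.
    + intros x Hx. apply conj_refl. apply class_Zc. apply Hf in Hx. destruct Hx as [_ [Hx _]]. auto.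
    + exists y. split; auto. eapply conj_trans; eauto. apply class_Zc; auto.
Qed.

Lemma c0_spec n : is_c0 n (c0 n).
Proof. unfold c0. apply epsilon_spec. apply is_c0_exists. Qed.
Open Scope R_scope.

Lemma pRZ_sub p p' : powerRZ 2 (Z.of_nat p - Z.of_nat p') * (2 ^ p') = 2 ^ p.
Proof.
  unfold Z.sub. rewrite powerRZ_add by lra. rewrite powerRZ_neg', <- !pow_powerRZ.
  field. apply pow_nonzero. lra.
Qed.

Lemma conj_div V p p' : conjG (IZR V / 2 ^ p, 0%Z) (IZR V / 2 ^ p', 0%Z).
Proof.
  apply conj_char. apply dyadic_div. exists (Z.of_nat p - Z.of_nat p')%Z. f_equal.
  pose proof (pRZ_sub p p'). assert (2 ^ p <> 0) by (apply pow_nonzero; lra).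
  assert (2 ^ p' <> 0) by (apply pow_nonzero; lra).
  set (A := powerRZ 2 (Z.of_nat p - Z.of_nat p')) in *.
  assert (0 < A) by apply pRZ_pos. rewrite <- H. field. split; auto; lra.
Qed.

Lemma c0_upper n : (c0 n <= length (E n))%nat.
Proof.
  destruct (c0_spec n) as [reps [Hlen [Hq [Hnth Hcov]]]]. rewrite <- Hlen.
  apply (inj_count reps (E n) (fun r V => exists p, conjG r (IZR V / 2 ^ p, 0%Z)) conjG).
  - apply nth_PW with (d := bs_one). intros i j Hi Hj. apply Hnth; lia.
  - intros r Hr. destruct (Hq r Hr) as [Hc [[g' [Hg' [w [Hw1 [Hw2 Hw3]]]]] _]].
    destruct (proj2 Hc g' Hg') as [_ Hk].
    destruct (word_inv w Hw2) as [p [q [V [H1 [H2 H3]]]]]. rewrite Hw3 in *.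
    exists V. split.
    + apply E_in with (L := (p + q)%nat). rewrite Hk in H3. simpl (Z.abs 0) in H3. lia.
    + exists p. destruct g' as [x k]. simpl in *. subst. exact Hg'.
  - intros r r' V Hr Hr' [p Hp] [p' Hp'].
    assert (Zr : Zc r) by (apply class_Zc; apply Hq; auto).
    assert (Zr' : Zc r') by (apply class_Zc; apply Hq; auto).
    apply conj_trans with (g' := (IZR V / 2 ^ p, 0%Z)); auto.
    apply conj_trans with (g' := (IZR V / 2 ^ p', 0%Z)).
    exists (IZR V / 2 ^ p). split; auto. apply dyadic_div. apply conj_div.
    apply conj_sym; auto.
Qed.

Lemma sg_1 t : sg (4 * t + 1) = 1%Z.
Proof. unfold sg. destruct (Z.eqb_spec ((4 * t + 1) mod 4) 1); auto. Z.div_mod_to_equations; lia. Qed.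
Lemma sg_3 t : sg (4 * t + 3) = (-1)%Z.
Proof. unfold sg. destruct (Z.eqb_spec ((4 * t + 3) mod 4) 1); auto. Z.div_mod_to_equations; lia. Qed.

Lemma odd_cases V : (V mod 2 = 1)%Z -> exists t, (V = 4 * t + 1 \/ V = 4 * t + 3)%Z.
Proof. intros H. exists (V / 4)%Z. Z.div_mod_to_equations. lia. Qed.

Lemma half_beta U : (U mod 2 = 1)%Z ->
  ((beta U - sg (beta U)) / 2 = 2 * ((U - sg U) / 2))%Z.
Proof.
  intros H. destruct (beta_spec U H) as [t [[-> ->]|[-> ->]]].
  - replace (8 * t + 1)%Z with (4 * (2 * t) + 1)%Z by lia. rewrite !sg_1.
    replace (4 * (2 * t) + 1 - 1)%Z with ((4 * t) * 2)%Z by lia.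
    replace (4 * t + 1 - 1)%Z with ((2 * t) * 2)%Z by lia. rewrite !Z.div_mul; lia.
  - replace (8 * t + 7)%Z with (4 * (2 * t + 1) + 3)%Z by lia. rewrite !sg_3.
    replace (4 * (2 * t + 1) + 3 - -1)%Z with ((4 * t + 4) * 2)%Z by lia.
    replace (4 * t + 3 - -1)%Z with ((2 * t + 2) * 2)%Z by lia. rewrite !Z.div_mul; lia.
Qed.

Lemma half_a1 U : ((a1 U - sg (a1 U)) / 2 = 2 * U)%Z.
Proof. unfold a1. rewrite sg_1. replace (4 * U + 1 - 1)%Z with ((2 * U) * 2)%Z by lia. rewrite Z.div_mul; lia. Qed.

Lemma half_a2 U : ((a2 U - sg (a2 U)) / 2 = 2 * U)%Z.
Proof.
  unfold a2. replace (4 * U - 1)%Z with (4 * (U - 1) + 3)%Z by lia. rewrite sg_3.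
  replace (4 * (U - 1) + 3 - -1)%Z with ((2 * U) * 2)%Z by lia. rewrite Z.div_mul; lia.
Qed.

Lemma half_recon V : (V mod 2 = 1)%Z -> V = (sg V + 2 * ((V - sg V) / 2))%Z.
Proof.
  intros H. destruct (odd_cases V H) as [t [-> | ->]].
  - rewrite sg_1. replace (4 * t + 1 - 1)%Z with ((2 * t) * 2)%Z by lia. rewrite Z.div_mul; lia.
  - rewrite sg_3. replace (4 * t + 3 - -1)%Z with ((2 * t + 2) * 2)%Z by lia. rewrite Z.div_mul; lia.
Qed.

Lemma sg_cases V : sg V = 1%Z \/ sg V = (-1)%Z.
Proof. unfold sg. destruct (_ =? _)%Z; auto. Qed.

Lemma Fam_good n : (forall V, In V (Fam n) -> (V mod 2 = 1)%Z /\ (1 <= V)%Z) /\ NoDup (Fam n).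
Proof.
  destruct (P_good n) as [Hg' Hd']. unfold Fam. split.
  - intros V HV. apply in_app_iff in HV. destruct HV as [HV|HV].
    destruct (Nat.leb 1 n); simpl in HV; [destruct HV as [<-|[]]; split; reflexivity|tauto].
    destruct (Hg' V HV). unfold goodP in *. lia.
  - apply NoDup_app; auto. destruct (Nat.leb 1 n); repeat constructor; simpl; tauto.
    intros a Ha. destruct (Nat.leb 1 n); simpl in Ha; [|tauto]. destruct Ha as [<-|[]].
    intros Hin. destruct (Hg' 1%Z Hin). lia.
Qed.

Definition Pw (n : nat) : Prop := forall V, In V (P n) -> exists w,
  Forall (fun s => In s gens) w /\ (length w + 3 <= n)%nat /\
  eval_word w = (IZR ((V - sg V) / 2), 0%Z).

Definition Fw (n : nat) : Prop := forall V, In V (Fam n) -> exists w,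
  Forall (fun s => In s gens) w /\ (length w <= n)%nat /\ eval_word w = (IZR V, 0%Z).

Lemma Forall_tconj w : Forall (fun s => In s gens) w ->
  Forall (fun s => In s gens) (gen_t :: w ++ [bs_inv gen_t]).
Proof.
  intros H. constructor. simpl; auto. apply Forall_app. split; auto.
  constructor; [simpl; auto | constructor].
Qed.

Lemma Fw_of_Pw n : Pw n -> Fw n.
Proof.
  intros HP V HV. pose proof (proj1 (Fam_good n) V HV) as [Hodd _].
  unfold Fam in HV. apply in_app_iff in HV. destruct HV as [HV|HV].
  - destruct (Nat.leb 1 n) eqn:E1; simpl in HV; [|tauto]. destruct HV as [<-|[]].
    apply Nat.leb_le in E1. exists [gen_a]. split. constructor; simpl; auto.
    split. simpl; lia. unfold eval_word, fold_right, bs_mul, gen_a, bs_one. simpl. f_equal. ring.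
  - destruct (HP V HV) as [w [Hw1 [Hw2 Hw3]]].
    set (X := ((V - sg V) / 2)%Z) in *.
    exists ((if Z.eqb (sg V) 1 then gen_a else bs_inv gen_a) :: gen_t :: w ++ [bs_inv gen_t]).
    split; [|split].
    + constructor. destruct (_ =? _)%Z; simpl; auto. apply Forall_tconj; auto.
    + simpl. rewrite length_app. simpl. lia.
    + change (eval_word ((if Z.eqb (sg V) 1 then gen_a else bs_inv gen_a) :: gen_t :: w ++ [bs_inv gen_t]))
        with (bs_mul (if Z.eqb (sg V) 1 then gen_a else bs_inv gen_a) (eval_word (gen_t :: w ++ [bs_inv gen_t]))).
      rewrite (eval_tconj w _ Hw3).
      pose proof (half_recon V Hodd). fold X in H.
      destruct (sg_cases V) as [Hs|Hs]; rewrite Hs in *; simpl (Z.eqb _ _); cbv iota;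
      unfold bs_mul, bs_inv, gen_a; simpl; f_equal; rewrite H; rewrite plus_IZR, mult_IZR; simpl; ring.
Qed.

Lemma Pw_all n : Pw n.
Proof.
  induction n as [n IH] using (well_founded_induction lt_wf).
  destruct n as [|[|n]]; intros V HV; try (simpl in HV; tauto).
  rewrite P_SS in HV. apply in_app_iff in HV. destruct HV as [HV|HV].
  - apply in_map_iff in HV. destruct HV as [U [<- HU]].
    destruct (IH n ltac:(lia) U HU) as [w [Hw1 [Hw2 Hw3]]].
    exists (gen_t :: w ++ [bs_inv gen_t]). split; [apply Forall_tconj; auto|split].
    + simpl. rewrite length_app. simpl. lia.
    + rewrite (eval_tconj w _ Hw3). destruct (proj1 (P_good n) U HU) as [Ho _].
      rewrite half_beta by auto. rewrite mult_IZR. reflexivity.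
  - destruct n as [|[|[|m]]]; try (simpl in HV; tauto).
    assert (HF : Fw m) by (apply Fw_of_Pw; apply IH; lia).
    apply in_app_iff in HV. destruct HV as [HV|HV]; apply in_map_iff in HV; destruct HV as [U [<- HU]];
    destruct (HF U HU) as [w [Hw1 [Hw2 Hw3]]];
    exists (gen_t :: w ++ [bs_inv gen_t]); (split; [apply Forall_tconj; auto|split]);
    try (simpl; rewrite length_app; simpl; lia);
    rewrite (eval_tconj w _ Hw3); [rewrite half_a1 | rewrite half_a2]; rewrite mult_IZR; reflexivity.
Qed.
Open Scope R_scope.

Fixpoint Ssum (n : nat) : nat :=
  match n with O => c0 0 | S m => (Ssum m + c0 (S m))%nat end.

Lemma allR n : exists l : list BS, length l = Ssum n /\
  forall g, class_in_Z12 g -> forall j, (j <= n)%nat -> class_length_is g j ->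
  exists r, In r l /\ conjG g r.
Proof.
  induction n as [|n [l [Hl Hc]]].
  - destruct (c0_spec 0) as [reps [H1 [_ [_ H4]]]]. exists reps. split; auto.
    intros g Hg j Hj Hgj. replace j with 0%nat in * by lia. apply H4; auto.
  - destruct (c0_spec (S n)) as [reps [H1 [_ [_ H4]]]]. exists (l ++ reps). split.
    rewrite length_app. simpl. lia.
    intros g Hg j Hj Hgj. destruct (Nat.eq_dec j (S n)) as [->|Hne].
    + destruct (H4 g Hg Hgj) as [r [Hr1 Hr2]]. exists r. split; auto. apply in_or_app; auto.
    + destruct (Hc g Hg j ltac:(lia) Hgj) as [r [Hr1 Hr2]]. exists r. split; auto. apply in_or_app; auto.
Qed.

Lemma min_exists (Pr : nat -> Prop) n : Pr n -> exists j, Pr j /\ forall m, Pr m -> (j <= m)%nat.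
Proof.
  induction n as [n IH] using (well_founded_induction lt_wf). intros Hn.
  destruct (classic (exists m, (m < n)%nat /\ Pr m)) as [[m [Hm1 Hm2]]|Hno].
  - apply (IH m Hm1 Hm2).
  - exists n. split; auto. intros m Hm. destruct (le_lt_dec n m); auto.
    exfalso. apply Hno. eauto.
Qed.

Lemma odd_pow_eq V V' k : (V mod 2 = 1)%Z -> (V' mod 2 = 1)%Z ->
  IZR V' = powerRZ 2 k * IZR V -> V = V'.
Proof.
  assert (Hgen : forall U U' a, (U mod 2 = 1)%Z -> (U' mod 2 = 1)%Z -> IZR U' = 2 ^ a * IZR U -> U = U').
  { intros U U' a HU HU' H. replace 2 with (IZR 2) in H by reflexivity.
    rewrite pow_IZR, <- mult_IZR in H. apply eq_IZR in H.
    destruct a as [|a]. change (2 ^ Z.of_nat 0)%Z with 1%Z in H. lia.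
    rewrite pow2S in H. set (M := (2 ^ Z.of_nat a * U)%Z) in *.
    assert (U' = 2 * M)%Z by (subst M; lia). Z.div_mod_to_equations. lia. }
  intros HV HV' H. destruct (pRZ_cases k) as [a [[_ Hk]|[_ Hk]]]; rewrite Hk in H.
  - eapply Hgen; eauto.
  - symmetry. apply (Hgen V' V a); auto. rewrite H. field. apply pow_nonzero. lra.
Qed.

Lemma Fam_le_S n : (length (Fam n) <= Ssum n)%nat.
Proof.
  destruct (allR n) as [l [Hl Hc]]. rewrite <- Hl.
  destruct (Fam_good n) as [Hg Hd].
  apply (inj_count (Fam n) l (fun V r => conjG (IZR V, 0%Z) r) eq).
  - apply PW_NoDup. auto.
  - intros V HV.
    assert (HZ : Zc (IZR V, 0%Z)) by (exists (IZR V); split; auto; apply dyadic_IZR).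
    assert (Hcl : class_in_Z12 (IZR V, 0%Z)).
    { split. apply dyadic_IZR. intros g' Hg'. apply conj_Zc in Hg'; auto.
      destruct Hg' as [x [-> Hx]]. split; auto. }
    destruct (min_exists (fun m => exists g', conjG (IZR V, 0%Z) g' /\ in_ball m g') n) as [j [Hj1 Hj2]].
    { exists (IZR V, 0%Z). split. apply conj_refl; auto.
      destruct (Fw_of_Pw n (Pw_all n) V HV) as [w [Hw1 [Hw2 Hw3]]]. exists w. auto. }
    assert (Hjn : (j <= n)%nat).
    { apply Hj2. exists (IZR V, 0%Z). split. apply conj_refl; auto.
      destruct (Fw_of_Pw n (Pw_all n) V HV) as [w [Hw1 [Hw2 Hw3]]]. exists w. auto. }
    apply (Hc _ Hcl j Hjn). split; auto. intros g' m H1 H2. apply Hj2. eauto.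
  - intros V V' r HV HV' H1 H2.
    assert (HZ : Zc (IZR V, 0%Z)) by (exists (IZR V); split; auto; apply dyadic_IZR).
    assert (H3 : conjG (IZR V, 0%Z) (IZR V', 0%Z)).
    { apply conj_trans with (g' := r); auto. apply conj_sym; auto. exists (IZR V'); split; auto; apply dyadic_IZR. }
    apply conj_char in H3. destruct H3 as [k Hk]. injection Hk as Hk.
    apply (odd_pow_eq V V' k). apply Hg; auto. apply Hg; auto. auto. apply dyadic_IZR.
Qed.
Open Scope R_scope.

Lemma bernoulli d n : 0 <= d -> 1 + INR n * d <= (1 + d) ^ n.
Proof.
  intros Hd. induction n. simpl. lra.
  rewrite S_INR. simpl. pose proof (pos_INR n). nra.
Qed.

Lemma nat_above (r : R) : exists N : nat, r <= INR N.
Proof.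
  exists (Z.to_nat (up (Rabs r))). rewrite INR_IZR_INZ.
  destruct (archimed (Rabs r)) as [H1 _].
  assert (0 <= up (Rabs r))%Z. { apply le_IZR. pose proof (Rabs_pos r). simpl. lra. }
  rewrite Z2Nat.id by auto. pose proof (Rle_abs r). lra.
Qed.

Lemma root_le n b : (1 <= n)%nat -> 0 < b -> INR (c0 n) <= b ^ n -> c0_root n <= b.
Proof.
  intros Hn Hb H. unfold c0_root. destruct (Nat.eqb (c0 n) 0) eqn:E1. lra.
  apply Nat.eqb_neq in E1. assert (0 < INR (c0 n)) by (apply lt_0_INR; lia).
  assert (0 < INR n) by (apply lt_0_INR; lia).
  eapply Rle_trans. apply Rle_Rpower_l. left. apply Rinv_0_lt_compat. auto. split; eauto.
  rewrite <- Rpower_pow by auto. rewrite Rpower_mult.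
  rewrite Rinv_r by lra. rewrite Rpower_1; lra.
Qed.

Lemma root_ge n b : (1 <= n)%nat -> 0 < b -> c0_root n <= b -> INR (c0 n) <= b ^ n.
Proof.
  intros Hn Hb H. unfold c0_root in H. destruct (Nat.eqb (c0 n) 0) eqn:E1.
  apply Nat.eqb_eq in E1. rewrite E1. simpl. left. apply pow_lt. auto.
  apply Nat.eqb_neq in E1. assert (0 < INR (c0 n)) by (apply lt_0_INR; lia).
  assert (0 < INR n) by (apply lt_0_INR; lia).
  assert (Hr : INR (c0 n) = (Rpower (INR (c0 n)) (/ INR n)) ^ n).
  { rewrite <- Rpower_pow by (apply exp_pos). rewrite Rpower_mult.
    rewrite Rinv_l by lra. rewrite Rpower_1; lra. }
  rewrite Hr. apply pow_incr. split; auto. left. apply exp_pos.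
Qed.

Definition xu : R := 13485 / 10000.
Definition zl : R := 13475 / 10000.

Lemma c0_upper_R n : INR (c0 n) <= 4 * (INR n + 1) ^ 2 * x0 ^ n.
Proof.
  eapply Rle_trans. apply le_INR. apply c0_upper. apply E_bound.
Qed.

Lemma upper_eventually : exists N, forall n, (N <= n)%nat -> c0_root n <= xu.
Proof.
  set (d := 7 / 100000). set (rho := 1 + d).
  destruct (nat_above (4 / (d * d * d))) as [N HN].
  exists (S N). intros n Hn. apply root_le. lia. unfold xu; lra.
  assert (Hb : 1 + INR n * d <= rho ^ n) by (apply bernoulli; unfold d; lra).
  assert (H1 : d * (INR n + 1) <= rho ^ n) by (unfold d in *; lra).
  assert (HnN : INR N <= INR n) by (apply le_INR; lia).
  assert (H2 : 4 / (d * d) <= rho ^ n).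
  { assert (4 / (d * d) = d * (4 / (d * d * d))) by (unfold d; field). 
    assert (INR n * d <= rho ^ n) by lra.
    assert (4 / (d*d*d) * d <= INR n * d) by (apply Rmult_le_compat_r; [unfold d; lra | lra]).
    lra. }
  assert (H3 : (INR n + 1) ^ 2 <= (rho ^ n) ^ 2 / (d * d)).
  { assert (0 <= INR n + 1) by (pose proof (pos_INR n); lra).
    assert ((INR n + 1) <= rho ^ n / d). { apply (Rmult_le_reg_l d). unfold d; lra.
      replace (d * (rho ^ n / d)) with (rho ^ n) by (field; unfold d; lra). lra. }
    replace ((rho ^ n) ^ 2 / (d * d)) with ((rho ^ n / d) ^ 2) by (unfold d; field).
    apply pow_incr. lra. }
  assert (Hx : rho * rho * rho * x0 <= xu) by (unfold rho, d, x0, xu; lra).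
  assert (Hp0 : 0 < x0 ^ n) by (apply pow_lt; unfold x0; lra).
  assert (Hrho : 0 < rho ^ n) by (apply pow_lt; unfold rho, d; lra).
  eapply Rle_trans. apply c0_upper_R.
  apply Rle_trans with (4 * ((rho ^ n) ^ 2 / (d * d)) * x0 ^ n).
  { apply Rmult_le_compat_r. lra. lra. }
  apply Rle_trans with ((rho ^ n) * (rho ^ n) ^ 2 * x0 ^ n).
  { apply Rmult_le_compat_r. lra.
    replace (4 * ((rho ^ n) ^ 2 / (d * d))) with ((4 / (d * d)) * (rho ^ n) ^ 2) by (unfold d; field).
    apply Rmult_le_compat_r. apply pow_le. lra. auto. }
  replace (rho ^ n * (rho ^ n) ^ 2 * x0 ^ n) with ((rho * rho * rho * x0) ^ n)
    by (rewrite !Rpow_mult_distr; ring).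
  apply pow_incr. split. unfold rho, d, x0; lra. auto.
Qed.

Lemma upper : Rbar_le c0_growth_rate (Finite xu).
Proof.
  unfold c0_growth_rate. rewrite <- (LimSup_seq_const xu).
  apply LimSup_le. destruct upper_eventually as [N HN]. exists N. auto.
Qed.

Lemma key_lower : forall N, exists n, (N <= n)%nat /\ zl <= c0_root n.
Proof.
  intros N. apply NNPP. intros Hno.
  assert (HN : forall n, (N <= n)%nat -> c0_root n <= zl).
  { intros n Hn. destruct (Rle_lt_dec zl (c0_root n)) as [H|H]. exfalso; apply Hno; eauto. lra. }
  set (N1 := S N).
  assert (Hzl : 1 < zl) by (unfold zl; lra).
  assert (Hc : forall n, (N1 <= n)%nat -> INR (c0 n) <= zl ^ n).
  { intros n Hn. apply root_ge. unfold N1 in Hn; lia. lra. apply HN. unfold N1 in Hn; lia. }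
  set (D := INR (Ssum N1)).
  assert (HS : forall d, INR (Ssum (N1 + d)) <= D + zl ^ (S (N1 + d)) / (zl - 1)).
  { induction d.
    - rewrite Nat.add_0_r. assert (0 < zl ^ (S N1)) by (apply pow_lt; lra).
      assert (0 < zl ^ S N1 / (zl - 1)) by (apply Rdiv_lt_0_compat; lra). unfold D. lra.
    - rewrite Nat.add_succ_r. change (Ssum (S (N1 + d))) with (Ssum (N1 + d) + c0 (S (N1 + d)))%nat. rewrite plus_INR.
      assert (INR (c0 (S (N1 + d))) <= zl ^ S (N1 + d)) by (apply Hc; lia).
      replace (zl ^ S (S (N1 + d)) / (zl - 1)) with (zl ^ S (N1 + d) / (zl - 1) + zl ^ S (N1 + d))
        by (simpl; field; lra).
      lra. }
  assert (HD : 0 <= D) by apply pos_INR.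
  set (K := yb ^ 5 * (D + zl / (zl - 1))).
  set (r := yb / zl).
  assert (Hr1 : 0 <= r - 1) by (unfold r, yb, zl; lra).
  assert (Hr : 0 < r - 1) by (unfold r, yb, zl; lra).
  assert (Hbound : forall d, r ^ (N1 + d) <= K).
  { intros d. set (n := (N1 + d)%nat).
    assert (Hy : yb ^ n <= yb ^ 5 * INR (Ssum n)).
    { eapply Rle_trans. apply Fam_lower. unfold n, N1; lia.
      apply Rmult_le_compat_l. apply pow_le. unfold yb; lra. apply le_INR. apply Fam_le_S. }
    assert (Hzn : 1 <= zl ^ n) by (apply pow_R1_Rle; lra).
    assert (Hyb : yb = r * zl) by (unfold r; field; unfold zl; lra).
    assert (Hyn : yb ^ n = r ^ n * zl ^ n) by (rewrite Hyb, Rpow_mult_distr; reflexivity). rewrite Hyn in Hy.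
    assert (H5 : 0 < yb ^ 5) by (apply pow_lt; unfold yb; lra).
    assert (INR (Ssum n) <= (D + zl / (zl - 1)) * zl ^ n).
    { eapply Rle_trans. apply HS. 
      replace (zl ^ S (N1 + d) / (zl - 1)) with (zl / (zl - 1) * zl ^ n) by (unfold n; simpl; field; lra).
      assert (0 < zl / (zl - 1)) by (apply Rdiv_lt_0_compat; lra). nra. }
    assert (r ^ n * zl ^ n <= K * zl ^ n).
    { eapply Rle_trans. apply Hy. unfold K. rewrite Rmult_assoc. apply Rmult_le_compat_l; lra. }
    apply Rmult_le_reg_r with (zl ^ n). lra. lra. }
  destruct (nat_above (K / (r - 1) + 1)) as [M HM].
  pose proof (Hbound M) as HB.
  pose proof (bernoulli (r - 1) (N1 + M) Hr1) as HBe. replace (1 + (r - 1)) with r in HBe by ring.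
  assert (INR M <= INR (N1 + M)) by (apply le_INR; lia).
  assert (K / (r - 1) * (r - 1) = K) by (field; lra).
  assert ((K / (r - 1) + 1) * (r - 1) <= INR (N1 + M) * (r - 1)) by (apply Rmult_le_compat_r; lra).
  lra.
Qed.

Lemma lower : Rbar_le (Finite zl) c0_growth_rate.
Proof.
  unfold c0_growth_rate. rewrite LimSup_InfSup_seq.
  set (v := fun m => Sup_seq (fun n => c0_root (n + m))).
  assert (Hv : forall m, Rbar_le zl (v m)).
  { intros m. unfold v. destruct (key_lower m) as [n [Hn Hz]].
    apply Sup_seq_minor_le with (n := (n - m)%nat). simpl. replace (n - m + m)%nat with n by lia. auto. }
  pose proof (Inf_seq_correct v) as Hi. destruct (Inf_seq v) as [l| |] eqn:E1; simpl in *.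
  - destruct (Rle_lt_dec zl l) as [H|H]; auto.
    assert (Hp : 0 < zl - l) by lra.
    destruct (Hi (mkposreal _ Hp)) as [_ [n Hn]]. simpl in Hn.
    specialize (Hv n). destruct (v n); simpl in *; lra.
  - auto.
  - destruct (Hi zl) as [n Hn]. specialize (Hv n). destruct (v n); simpl in *; lra.
Qed.
End Dev.

Open Scope R_scope.

Theorem corollary3p10 :
  Rbar_le (Finite (13475 / 10000)) c0_growth_rate /\
  Rbar_le c0_growth_rate (Finite (13485 / 10000)).
Proof.
  split. exact Dev.lower. exact Dev.upper.
Qed.
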